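(* Let $L$ be a simple Lie algebra over a field $k$ with $|k|>2$, generated by its pure extremal elements, such that there exists a Galois extension $k'/k$ of degree at most $2$ for which the extremal geometry of $L\otimes_k k'$ contains lines, and such that there exist symplectic pairs of extremal elements in $L$. Then $L_{k'}:=L\otimes_k k'$ is simple.
   Context: A nonzero $a$ in a Lie algebra $M$ over $F$ is extremal if there is $g_a\colon M\to F$ with $[a,[a,u]]=2g_a(u)a$, $[[a,u],[a,w]]=g_a([u,w])a+g_a(w)[a,u]-g_a(u)[a,w]$, $[a,[u,[a,w]]]=g_a([u,w])a-g_a(w)[a,u]-g_a(u)[a,w]$ for all $u,w$; sandwiches satisfy $[a,[a,u]]=0=[a,[u,[a,w]]]$; pure = non-sandwich. Pure extremal $a,b$ with $Fa\ne Fb$ are collinear if $[a,b]=0$ and $\lambda a+\mu b$ is extremal or $0$ for all $\lambda,\mu$, and symplectic if $[a,b]=0$ and $\lambda a+\mu b$ is extremal or $0$ only when $\lambda\mu=0$. The extremal geometry (points: $Fa$, $a$ extremal; lines: spans of collinear pairs) contains lines iff a collinear pair exists. *)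

(* Defs.v *)
From HB Require Import structures.
From mathcomp Require Import all_boot all_order all_algebra all_field.
Set Implicit Arguments. Unset Strict Implicit. Unset Printing Implicit Defensive.
Import GRing.Theory.
Local Open Scope ring_scope.

Section LieNotions.
Variables (F : fieldType) (V : zmodType) (sc : F -> V -> V) (br : V -> V -> V).

Definition is_lie : Prop :=
  [/\ forall (c : F) x y z, br (sc c x + y) z = sc c (br x z) + br y z,
      forall (c : F) x y z, br z (sc c x + y) = sc c (br z x) + br z y,
      forall x, br x x = 0 &
      forall x y z, br x (br y z) + br y (br z x) + br z (br x y) = 0].

Definition extremal (a : V) : Prop :=
  a != 0 /\ exists g : V -> F, forall u w,
    [/\ br a (br a u) = sc (g u *+ 2) a,
        br (br a u) (br a w) = sc (g (br u w)) a + sc (g w) (br a u) - sc (g u) (br a w) &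
        br a (br u (br a w)) = sc (g (br u w)) a - sc (g w) (br a u) - sc (g u) (br a w)].

Definition sandwich (a : V) : Prop :=
  extremal a /\ forall u w, br a (br a u) = 0 /\ br a (br u (br a w)) = 0.

Definition pure (a : V) : Prop := extremal a /\ ~ sandwich a.

Definition distinct_points (a b : V) : Prop := ~ exists c : F, b = sc c a.

Definition collinear (a b : V) : Prop :=
  [/\ pure a, pure b, distinct_points a b, br a b = 0 &
      forall l m : F, extremal (sc l a + sc m b) \/ sc l a + sc m b = 0].

Definition symplectic (a b : V) : Prop :=
  [/\ pure a, pure b, distinct_points a b, br a b = 0 &
      forall l m : F, extremal (sc l a + sc m b) \/ sc l a + sc m b = 0 ->
                      l * m = 0].

(* The extremal geometry contains a line, i.e. the span of a collinear pair. *)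
Definition geometry_has_lines : Prop := exists a b, collinear a b.

Definition lie_subalgebra (S : V -> Prop) : Prop :=
  [/\ S 0, forall x y, S x -> S y -> S (x + y),
      forall (c : F) x, S x -> S (sc c x) & forall x y, S x -> S y -> S (br x y)].

Definition generated_by_pure_extremal : Prop :=
  forall S, lie_subalgebra S -> (forall x, pure x -> S x) -> forall x, S x.

Definition lie_ideal (I : V -> Prop) : Prop :=
  [/\ I 0, forall x y, I x -> I y -> I (x + y),
      forall (c : F) x, I x -> I (sc c x) & forall x y, I y -> I (br x y)].

Definition lie_simple : Prop :=
  (exists x y, br x y != 0) /\
  forall I, lie_ideal I -> (forall x, I x -> x = 0) \/ (forall x, I x).

End LieNotions.

(* Base change L (x)_k k' for a finite field extension k'/k, realized in
   coordinates w.r.t. the k-basis b = vbasis {:k'}: an element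
   sum_i v_i (x) b_i is stored as the finite function i |-> v_i. *)
Section BaseChange.
Variables (k : fieldType) (L : lmodType k) (k' : fieldExtType k).

Definition bc_basis := vbasis {:k'}.

Definition bcT := {ffun 'I_(\dim {:k'}) -> L}.

(* c . (sum_j v_j (x) b_j) = sum_i (sum_j coord_i(c b_j) v_j) (x) b_i *)
Definition bc_scale (c : k') (v : bcT) : bcT :=
  [ffun i => \sum_(j < \dim {:k'}) coord bc_basis i (c * tnth bc_basis j) *: v j].

(* [sum_j v_j (x) b_j, sum_l w_l (x) b_l] = sum_{j,l} [v_j,w_l] (x) b_j b_l *)
Definition bc_bracket (br : L -> L -> L) (v w : bcT) : bcT :=
  [ffun i => \sum_(j < \dim {:k'}) \sum_(l < \dim {:k'})
    coord bc_basis i (tnth bc_basis j * tnth bc_basis l) *: br (v j) (w l)].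

End BaseChange.

(* Main.v *)
Require Import Defs.
From HB Require Import structures.
From mathcomp Require Import all_boot all_order all_algebra all_field.
From Stdlib Require Import Classical IndefiniteDescription.
Import GRing.Theory.
Set Implicit Arguments. Unset Strict Implicit. Unset Printing Implicit Defensive.
Local Open Scope ring_scope.

Section LieFacts.
Variables (k : fieldType) (L : lmodType k) (br : L -> L -> L).
Hypothesis Hlie : is_lie *:%R br.

Lemma br0l z : br 0 z = 0.
Proof.
case: Hlie => H1 _ _ _; have := H1 1 0 0 z; rewrite !scale1r !addr0.
by move/(congr1 (fun t => t - br 0 z)); rewrite subrr addrK.
Qed.
Lemma br0r z : br z 0 = 0.
Proof.
case: Hlie => _ H1 _ _; have := H1 1 0 0 z; rewrite !scale1r !addr0.
by move/(congr1 (fun t => t - br z 0)); rewrite subrr addrK.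
Qed.
Lemma brDl x y z : br (x + y) z = br x z + br y z.
Proof. by case: Hlie => H1 _ _ _; have := H1 1 x y z; rewrite !scale1r. Qed.
Lemma brDr x y z : br z (x + y) = br z x + br z y.
Proof. by case: Hlie => _ H1 _ _; have := H1 1 x y z; rewrite !scale1r. Qed.
Lemma brZl c x z : br (c *: x) z = c *: br x z.
Proof. by case: Hlie => H1 _ _ _; have := H1 c x 0 z; rewrite !addr0 br0l addr0. Qed.
Lemma brZr c x z : br z (c *: x) = c *: br z x.
Proof. by case: Hlie => _ H1 _ _; have := H1 c x 0 z; rewrite !addr0 br0r addr0. Qed.
Lemma brNl x z : br (- x) z = - br x z.
Proof. by rewrite -scaleN1r brZl scaleN1r. Qed.
Lemma brNr x z : br z (- x) = - br z x.
Proof. by rewrite -scaleN1r brZr scaleN1r. Qed.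
Lemma brxx x : br x x = 0.
Proof. by case: Hlie. Qed.
Lemma br_anti x y : br x y = - br y x.
Proof.
have := brxx (x + y); rewrite brDl !brDr !brxx add0r addr0.
by move/eqP; rewrite addr_eq0 => /eqP.
Qed.

Lemma pure_eigen (T : L -> L) a :
  (forall c x, T (c *: x) = c *: T x) ->
  (forall x y, br x (T y) = T (br x y)) ->
  pure *:%R br a -> exists v lam, v != 0 /\ T v = lam *: v.
Proof.
move=> TZ TR [[anz [g Hg]] Hns].
have T0 : T 0 = 0 by rewrite -(scale0r 0) TZ !scale0r.
have g0 : g 0 = 0.
  have [_ H2 _] := Hg 0 0; move: H2; rewrite !br0r ?br0l !scaler0 subr0 addr0.
  by move/esym/eqP; rewrite scaler_eq0 (negPf anz) orbF => /eqP.
have [u gu] : exists u, g u != 0.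
  apply: NNPP => Hn; apply: Hns; split; first by split => //; exists g.
  have gz : forall u, g u = 0.
    by move=> u; apply/eqP; apply: NNPP => H; apply: Hn; exists u; apply/negP.
  move=> u w; have [H1 _ H3] := Hg u w.
  by rewrite H1 H3 !gz mul0rn !scale0r !subr0.
have [au0|aun0] := eqVneq (br a u) 0; last first.
  exists (br a u), (g (T u) / g u); split => //.
  have [_ H2 _] := Hg u (T u).
  move: H2; rewrite !TR !brxx !T0 g0 scale0r add0r.
  move/eqP; rewrite eq_sym subr_eq0 => /eqP H.
  by rewrite mulrC -scalerA H scalerA mulVf // scale1r.
have Haw : forall w, br a w = (g (br u w) / g u) *: a.
  move=> w; have [_ H2 _] := Hg u w; move: H2.
  rewrite au0 br0l scaler0 addr0 => /eqP; rewrite eq_sym subr_eq0 => /eqP H.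
  by rewrite mulrC -scalerA H scalerA mulVf // scale1r.
have [w aw] : exists w, br a w != 0.
  apply: NNPP => Hn; apply: Hns; split; first by split => //; exists g.
  have az : forall w, br a w = 0.
    by move=> w; apply/eqP; apply: NNPP => H; apply: Hn; exists w; apply/negP.
  by move=> u' w'; rewrite !az ?br0r ?az.
exists a, ((g (br u (T w)) / g u) / (g (br u w) / g u)); split => //.
have fw : g (br u w) / g u != 0.
  by apply: contra aw => /eqP f0; rewrite Haw f0 scale0r.
have := Haw (T w); rewrite TR Haw TZ => H.
by rewrite mulrC -scalerA -H scalerA mulVf // scale1r.
Qed.

End LieFacts.

Section BC.
Variables (k : fieldType) (L : lmodType k) (br : L -> L -> L) (k' : fieldExtType k).
Hypothesis Hlie : is_lie *:%R br.

Local Notation n := (\dim {:k'}).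
Local Notation bb := (vbasis {:k'}).
Local Notation V := (bcT L k').

Definition tens (x : L) (g : k') : V := [ffun i => coord bb i g *: x].

Lemma bb_free : free bb.
Proof. exact: basis_free (vbasisP _). Qed.

Lemma tens0l g : tens 0 g = 0.
Proof. by apply/ffunP => i; rewrite !ffunE scaler0. Qed.
Lemma tens0r x : tens x 0 = 0.
Proof. by apply/ffunP => i; rewrite !ffunE linear0 scale0r. Qed.
Lemma tensDl x y g : tens (x + y) g = tens x g + tens y g.
Proof. by apply/ffunP => i; rewrite !ffunE scalerDr. Qed.
Lemma tensDr x g h : tens x (g + h) = tens x g + tens x h.
Proof. by apply/ffunP => i; rewrite !ffunE linearD scalerDl. Qed.
Lemma tensZ c x g : tens (c *: x) g = tens x (c *: g).
Proof. by apply/ffunP => i; rewrite !ffunE scalerA [coord _ _ (c *: g)]linearZ /= mulrC. Qed.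

Lemma expand g : g = \sum_(j < n) coord bb j g *: bb`_j.
Proof. exact: coord_vbasis (memvf g). Qed.

Lemma scale_tens c x g : bc_scale c (tens x g) = tens x (c * g).
Proof.
apply/ffunP => i; rewrite !ffunE.
rewrite {2}(expand g) mulr_sumr linear_sum scaler_suml.
apply: eq_bigr => j _; rewrite ffunE /bc_basis (tnth_nth 0) scalerA -scalerAr linearZ /=.
by rewrite mulrC.
Qed.

Lemma scale0v c : bc_scale c (0 : V) = 0.
Proof. by apply/ffunP => i; rewrite !ffunE big1 // => j _; rewrite ffunE scaler0. Qed.

Lemma scaleD c (v w : V) : bc_scale c (v + w) = bc_scale c v + bc_scale c w.
Proof.
apply/ffunP => i; rewrite !ffunE -big_split; apply: eq_bigr => j _.
by rewrite ffunE scalerDr.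
Qed.

Lemma bracketD (u v w : V) :
  bc_bracket br u (v + w) = bc_bracket br u v + bc_bracket br u w.
Proof.
apply/ffunP => i; rewrite !ffunE -big_split; apply: eq_bigr => j _.
rewrite -big_split; apply: eq_bigr => l _.
by rewrite ffunE (brDr Hlie) scalerDr.
Qed.

Lemma bracket_tens x y g h :
  bc_bracket br (tens x g) (tens y h) = tens (br x y) (g * h).
Proof.
apply/ffunP => i; rewrite !ffunE.
rewrite {2}(expand g) {2}(expand h) mulr_suml linear_sum scaler_suml.
apply: eq_bigr => j _; rewrite mulr_sumr linear_sum scaler_suml.
apply: eq_bigr => l _; rewrite !ffunE (brZl Hlie) (brZr Hlie) !scalerA.
rewrite /bc_basis !(tnth_nth 0) -scalerAl -scalerAr !linearZ /=.
by rewrite mulrC mulrA.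
Qed.

Lemma decomp (v : V) : v = \sum_(j < n) tens (v j) bb`_j.
Proof.
apply/ffunP => i; rewrite sum_ffunE (bigD1 i) //= big1 ?addr0.
  by rewrite ffunE coord_free ?bb_free // eqxx scale1r.
by move=> j /negPf ji; rewrite ffunE coord_free ?bb_free // ji scale0r.
Qed.

Lemma tens_eq0 x g : g != 0 -> tens x g = 0 -> x = 0.
Proof.
move=> gn0 H; apply/eqP; apply: contraT => xn0; rewrite -(negbTE gn0); apply/eqP.
rewrite (expand g) big1 // => j _.
have := congr1 (fun f : V => f j) H; rewrite !ffunE => /eqP.
by rewrite scaler_eq0 (negPf xn0) orbF => /eqP ->; rewrite scale0r.
Qed.


Lemma scaleN1 (w : V) : bc_scale (-1) w = - w.
Proof.
apply/ffunP => i; rewrite !ffunE (bigD1 i) //= big1 ?addr0.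
  by rewrite /bc_basis (tnth_nth 0) mulN1r [coord _ _ (- _)]linearN /= coord_free ?bb_free // eqxx scaleN1r.
move=> j /negPf ji; rewrite /bc_basis (tnth_nth 0) mulN1r [coord _ _ (- _)]linearN /= coord_free ?bb_free //.
by rewrite ji oppr0 scale0r.
Qed.

Lemma bc_simple : lie_simple *:%R br -> (exists a, pure *:%R br a) -> (n <= 2)%N ->
  lie_simple (@bc_scale k L k') (bc_bracket br).
Proof.
move=> [[x [y nxy]] HS] [a Ha] Hn.
have one0 : (1 : k') != 0 := oner_neq0 _.
split.
  exists (tens x 1), (tens y 1); rewrite bracket_tens mulr1.
  by apply: contra nxy => /eqP /(tens_eq0 one0) ->.
move=> I [I0 ID IZ IB].
pose B := fun z => I (tens z 1).
have HB : lie_ideal *:%R br B.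
  split; rewrite /B.
  - by rewrite tens0l.
  - by move=> u w Iu Iw; rewrite tensDl; apply: ID.
  - by move=> c u Iu; rewrite tensZ -[c *: (1 : k')]mulr_algl -scale_tens; apply: IZ.
  - by move=> u w Iw; have := IB (tens u 1) _ Iw; rewrite bracket_tens mulr1.
have Isum : forall (F : 'I_n -> V), (forall j, I (F j)) -> I (\sum_j F j).
  by move=> F HF; apply: big_ind => //.
case: (HS B HB) => [B0|Ball]; last first.
  right => v; rewrite (decomp v); apply: Isum => j.
  by rewrite -[bb`_j]mulr1 -scale_tens; apply: IZ; exact: Ball.
left => v Iv.
move: Hn; rewrite leq_eqVlt ltnS leq_eqVlt ltnS leqn0.
case/orP=> [/eqP n2|/orP[/eqP n1|/eqP n0]]; last first.
- by apply/ffunP => -[m hm]; have : (m < 0)%N by rewrite -n0.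
- apply/ffunP => j; rewrite ffunE; apply: B0; rewrite /B.
  have bj0 : bb`_j != 0 by apply: (free_not0 bb_free); apply: mem_nth; rewrite size_tuple.
  have -> : tens (v j) 1 = bc_scale (bb`_j)^-1 v.
    rewrite {2}(decomp v) (bigD1 j) //= big1 ?addr0.
      by rewrite scale_tens mulVf.
    move=> j' /negP H; exfalso; apply: H; apply/eqP; apply: val_inj.
    have h1 : (val j' < 1)%N by move: (ltn_ord j'); rewrite [X in (_ < X)%N -> _]n1.
    have h2 : (val j < 1)%N by move: (ltn_ord j); rewrite [X in (_ < X)%N -> _]n1.
    by move: h1 h2; rewrite !ltnS !leqn0 => /eqP -> /eqP ->.
  by apply: IZ.
have [be Hbe] : exists be : k', be \notin 1%VS.
  have : ~~ ((fullv : {vspace k'}) <= 1%VS)%VS.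
    by apply/negP => /dimvS; rewrite dimv1 n2.
  by case/subvPn => be _ Hbe; exists be.
pose e := [tuple be; 1%R] : 2.-tuple k'.
have free_e : free e.
  by rewrite /= free_cons (_ : <<[:: (1%R : k')]>> = 1)%VS ?span_seq1 // Hbe seq1_free one0.
have He : forall g, g = coord e 0 g *: be + coord e 1 g *: 1.
  move=> g; have : g \in <<e>>%VS.
    have -> : (<<e>> = fullv)%VS.
      apply/eqP; rewrite eqEdim subvf (eqnP free_e) /= -n2 //.
    exact: memvf.
  move/coord_span => H; rewrite {1}H big_ord_recl big_ord1 /=.
  by congr (coord e _ g *: be + (coord e _ g)%:A); apply: val_inj.
have split_tens : forall z g, exists x y, tens z g = tens x 1 + tens y be.
  move=> z g; exists (coord e 1 g *: z), (coord e 0 g *: z).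
  by rewrite !tensZ -tensDr addrC -He.
have splitv : forall w : V, exists x y, w = tens x 1 + tens y be.
  move=> w; rewrite (decomp w); apply: (big_ind (fun w => exists x y, w = tens x 1 + tens y be)).
  - by exists 0, 0; rewrite !tens0l addr0.
  - move=> _ _ [x1 [y1 ->]] [x2 [y2 ->]]; exists (x1 + x2), (y1 + y2).
    by rewrite !tensDl addrACA.
  - by move=> j _; exact: split_tens.
pose R y x := I (tens x 1 + tens y be).
have Runiq : forall y x1 x2, R y x1 -> R y x2 -> x1 = x2.
  move=> y' x1 x2 H1 H2; apply/eqP; rewrite -subr_eq0; apply/eqP; apply: B0.
  have := ID _ _ H1 (IZ (-1) _ H2); rewrite scaleN1 opprD addrACA subrr addr0.
  move=> H; rewrite /B tensDl (_ : tens (- x2) 1 = - tens x2 1) //.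
  by apply/ffunP => i; rewrite !ffunE scalerN.
have RZ : forall c y x, R y x -> R (c *: y) (c *: x).
  move=> c y' x' H; have := IZ (c%:A) _ H.
  by rewrite /R scaleD !scale_tens !mulr_algl !tensZ.
have RB : forall z y x, R y x -> R (br z y) (br z x).
  move=> z y' x' H; have := IB (tens z 1) _ H.
  by rewrite /R bracketD !bracket_tens !mul1r.
have [x0 [y0 Hv]] := splitv v.
have [y00|y0n] := eqVneq y0 0.
  move: Iv; rewrite Hv y00 tens0l addr0 => Hx; have := B0 _ Hx.
  by move=> ->; rewrite tens0l.
exfalso.
pose A' := fun y => exists x, R y x.
have HA : lie_ideal *:%R br A'.
  split; rewrite /A'.
  - by exists 0; rewrite /R !tens0l addr0.
  - move=> u w [x1 H1] [x2 H2]; exists (x1 + x2); have := ID _ _ H1 H2.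
    by rewrite /R !tensDl addrACA.
  - by move=> c u [x1 H1]; exists (c *: x1); apply: RZ.
  - by move=> u w [x1 H1]; exists (br u x1); apply: RB.
have Rtot : forall y, exists x, R y x.
  case: (HS A' HA) => [H|H]; last exact: H.
  by move: y0n; rewrite (H y0) ?eqxx //; exists x0; rewrite /R -Hv.
have [T HT] := functional_choice _ Rtot.
have TZ : forall c x, T (c *: x) = c *: T x.
  by move=> c x'; apply: (Runiq (c *: x')); [apply: HT | apply: RZ; apply: HT].
have TR : forall x y, br x (T y) = T (br x y).
  by move=> x' y'; apply: (Runiq (br x' y')); [apply: RB; apply: HT | apply: HT].
have [w [lam [wn0 Tw]]] := pure_eigen Hlie TZ TR Ha.
have Hg : lam *: 1 + be != 0.
  apply: contra Hbe => /eqP H.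
  have -> : be = (- lam) *: 1.
    by apply/eqP; rewrite scaleNr -addr_eq0 addrC H.
  by apply: memvZ; exact: memv_line.
move: (HT w); rewrite /R Tw tensZ -tensDr => Hw.
have := IZ (lam *: 1 + be)^-1 _ Hw; rewrite scale_tens mulVf // => Hw1.
by move: wn0; rewrite (B0 _ Hw1) eqxx.
Qed.

End BC.

Theorem lemma5p2 (k : fieldType) (L : lmodType k) (br : L -> L -> L)
  (k' : splittingFieldType k) :
  is_lie *:%R br ->
  (exists c : k, c != 0 /\ c != 1) ->
  lie_simple *:%R br ->
  generated_by_pure_extremal *:%R br ->
  galois 1%VS {:k'} ->
  (\dim {:k'} <= 2)%N ->
  geometry_has_lines (@bc_scale k L k') (bc_bracket br) ->
  (exists a b : L, symplectic *:%R br a b) ->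
  lie_simple (@bc_scale k L k') (bc_bracket br).
Proof.
move=> Hlie _ HS _ _ Hn _ [a [b [Ha _ _ _ _]]].
exact: (bc_simple Hlie HS (ex_intro _ a Ha) Hn).
Qed.
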